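(* Let $0<\alpha<1$, $\lambda>0$, $C=\frac1\alpha-1$ and $W_{+}(s)=\frac{1}{C}\,\lambda\frac{\sin(\alpha\pi)}{\pi}\frac{s^{\alpha-1}}{s^{2\alpha}-2\lambda s^{\alpha}\cos(\alpha\pi)+\lambda^{2}}$ for $s>0$. Let $u_1,u_2$ be independent random variables uniformly distributed on $(0,1)$, put $v=Cu_1$ and $$\tau=-\Big(\frac1\lambda\Big)^{1/\alpha}\left(\frac{\sin(\alpha\pi(1+2v))-\sin(\alpha\pi)}{\sin(2\alpha\pi(1+v))}\right)^{1/\alpha}\log(u_2).$$ Then $\tau$ is a positive random variable whose survival function is $$\mathbb{P}(\tau>t)=\phi_{W_+}(t):=\int_0^\infty W_{+}(s)\,e^{-st}\,\mathrm{d}s\qquad (t\ge 0).$$ *)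

(* Defs.v *)
From Stdlib Require Import Reals Lra ClassicalEpsilon.
Open Scope R_scope.

Definition Cst (alpha : R) : R := 1 / alpha - 1.

Definition W_plus (alpha lambda s : R) : R :=
  (1 / Cst alpha) * lambda * (sin (alpha * PI) / PI) *
  (Rpower s (alpha - 1) /
   (Rpower s (2 * alpha) - 2 * lambda * Rpower s alpha * cos (alpha * PI)
    + lambda ^ 2)).

Definition tau (alpha lambda u1 u2 : R) : R :=
  let v := Cst alpha * u1 in
  - Rpower (1 / lambda) (1 / alpha) *
    Rpower ((sin (alpha * PI * (1 + 2 * v)) - sin (alpha * PI))
            / sin (2 * alpha * PI * (1 + v))) (1 / alpha) *
    ln u2.

Definition RInt_is (f : R -> R) (a b I : R) : Prop :=
  exists pr : Riemann_integrable f a b, RiemannInt pr = I.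

Definition ind2 (E : R -> R -> Prop) (u1 u2 : R) : R :=
  if excluded_middle_informative (0 < u1 < 1 /\ 0 < u2 < 1 /\ E u1 u2)
  then 1 else 0.

(* P(E) = p for (u1,u2) independent uniform on (0,1): the probability is the
   Lebesgue measure of E in the unit square, computed as an iterated
   (Fubini) Riemann integral of the indicator. *)
Definition prob_unif2 (E : R -> R -> Prop) (p : R) : Prop :=
  exists g : R -> R,
    (forall u1, 0 <= u1 <= 1 -> RInt_is (fun u2 => ind2 E u1 u2) 0 1 (g u1)) /\
    RInt_is g 0 1 p.

Definition improper_int_0_inf (f : R -> R) (L : R) : Prop :=
  forall eps, 0 < eps ->
    exists delta M, 0 < delta /\
      forall a b, 0 < a < delta -> M < b ->
        exists pr : Riemann_integrable f a b, Rabs (RiemannInt pr - L) < eps.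

(* Main.v *)
Require Import Defs.
From Stdlib Require Import Reals Lra ClassicalEpsilon.
From Coquelicot Require Import Coquelicot.
Import Defs.
Open Scope R_scope.

Definition Th (a u : R) := a * PI * (1 + Cst a * u).
Definition Qf (a l u : R) := l * sin (Th a u) / sin (Th a u - a * PI).
Definition Sfun (a l u : R) := Rpower (Qf a l u) (1 / a).
Definition ff (a l t u : R) := exp (- (Sfun a l u * t)).
Definition phi (a l s : R) :=
  ((PI / 2 - atan (cos (a * PI) / sin (a * PI) - l / (sin (a * PI) * Rpower s a)))
    / (a * PI) - 1) / Cst a.

Lemma Cst_pos a : 0 < a < 1 -> 0 < Cst a.
Proof. intros [H0 H1]. unfold Cst. assert (1 < 1 / a).
  { apply (Rmult_lt_reg_r a); try lra. field_simplify; lra. } lra. Qed.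

Lemma Th_1 a : 0 < a < 1 -> Th a 1 = PI.
Proof. intros H. unfold Th, Cst. field. lra. Qed.

Lemma Th_0 a : Th a 0 = a * PI.
Proof. unfold Th. ring. Qed.

Lemma Th_lt a u v : 0 < a < 1 -> u < v -> Th a u < Th a v.
Proof. intros H Huv. unfold Th. pose proof (Cst_pos a H). pose proof PI_RGT_0.
  apply Rmult_lt_compat_l. nra. nra. Qed.

Lemma Th_range a u : 0 < a < 1 -> 0 < u < 1 -> a * PI < Th a u < PI.
Proof. intros H Hu. rewrite <- Th_0. rewrite <- (Th_1 a H). split; apply Th_lt; lra. Qed.

Lemma sa_pos a : 0 < a < 1 -> 0 < sin (a * PI).
Proof. intros H. pose proof PI_RGT_0. apply sin_gt_0; nra. Qed.

Definition Rr (a u : R) := (sin (a * PI * (1 + 2 * (Cst a * u))) - sin (a * PI))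
            / sin (2 * a * PI * (1 + Cst a * u)).
Definition Kf (a l u : R) := Rpower (1 / l) (1 / a) * Rpower (Rr a u) (1 / a).

Lemma tau_Kf a l u u2 : tau a l u u2 = - (Kf a l u * ln u2).
Proof. unfold tau, Kf, Rr. ring. Qed.

Lemma Kf_pos a l u : 0 < Kf a l u.
Proof. unfold Kf, Rpower. apply Rmult_lt_0_compat; apply exp_pos. Qed.

Lemma Rr_eq a u : cos (Th a u) <> 0 -> sin (Th a u) <> 0 ->
  Rr a u = sin (Th a u - a * PI) / sin (Th a u).
Proof. intros Hc Hs. unfold Rr.
  replace (a * PI * (1 + 2 * (Cst a * u))) with (2 * Th a u - a * PI) by (unfold Th; ring).
  replace (2 * a * PI * (1 + Cst a * u)) with (2 * Th a u) by (unfold Th; ring).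
  set (T := Th a u) in *.
  rewrite sin_minus, sin_2a, cos_2a, sin_minus.
  field_simplify; [|lra|lra].
  pose proof (sin2_cos2 T). unfold Rsqr in H.
  replace (sin T ^ 2) with (1 - cos T ^ 2) by (simpl; lra).
  field. split; assumption.
Qed.

Lemma Rpower_inv x p : 0 < x -> Rpower (/ x) p = / Rpower x p.
Proof. intros Hx. unfold Rpower. rewrite ln_Rinv by lra.
  rewrite <- exp_Ropp. f_equal. ring. Qed.

Lemma sinT_pos a u : 0 < a < 1 -> 0 < u < 1 -> 0 < sin (Th a u).
Proof. intros Ha Hu. pose proof (Th_range a u Ha Hu). pose proof PI_RGT_0.
  apply sin_gt_0; nra. Qed.

Lemma sinTa_pos a u : 0 < a < 1 -> 0 < u < 1 -> 0 < sin (Th a u - a * PI).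
Proof. intros Ha Hu. pose proof (Th_range a u Ha Hu). pose proof PI_RGT_0.
  apply sin_gt_0; nra. Qed.

Lemma Kf_inv a l u : 0 < a < 1 -> 0 < l -> 0 < u < 1 -> cos (Th a u) <> 0 ->
  / Kf a l u = Sfun a l u.
Proof. intros Ha Hl Hu Hc. pose proof (sinT_pos a u Ha Hu). pose proof (sinTa_pos a u Ha Hu).
  unfold Kf, Sfun. rewrite Rr_eq by lra.
  rewrite Rpower_mult_distr.
  - rewrite <- Rpower_inv. f_equal. unfold Qf. field. split; lra.
    apply Rmult_lt_0_compat. apply Rdiv_lt_0_compat; lra. apply Rdiv_lt_0_compat; lra.
  - apply Rdiv_lt_0_compat; lra.
  - apply Rdiv_lt_0_compat; lra.
Qed.

Lemma tau_gt a l u u2 t : 0 < u2 ->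
  (tau a l u u2 > t <-> u2 < exp (- (t / Kf a l u))).
Proof. intros Hu2. rewrite tau_Kf. pose proof (Kf_pos a l u). split; intros H1.
  - rewrite <- (exp_ln u2) by lra. apply exp_increasing.
    apply (Rmult_lt_reg_l (Kf a l u)); auto. field_simplify; lra.
  - rewrite <- (exp_ln u2) in H1 by lra. apply exp_lt_inv in H1.
    apply (Rmult_lt_compat_l (Kf a l u)) in H1; auto. field_simplify in H1; lra.
Qed.

Lemma to_RInt_is f a b v : is_RInt f a b v -> RInt_is f a b v.
Proof. intros H. assert (He : ex_RInt f a b) by (exists v; exact H).
  exists (ex_RInt_Reals_0 f a b He). rewrite <- RInt_Reals. now apply is_RInt_unique. Qed.

Lemma is_RInt_const' (h : R -> R) a b c : a <= b -> (forall x, a < x < b -> h x = c) ->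
  is_RInt h a b ((b - a) * c).
Proof. intros Hab H. apply is_RInt_ext with (fun _ => c).
  - intros x Hx. rewrite Rmin_left in Hx by lra. rewrite Rmax_right in Hx by lra.
    symmetry; apply H; lra.
  - exact (is_RInt_const a b c). Qed.

Lemma inner_int (h : R -> R) c : 0 < c <= 1 -> (forall x, 0 < x < c -> h x = 1) ->
  (forall x, c < x < 1 -> h x = 0) -> is_RInt h 0 1 c.
Proof. intros Hc H1 H0.
  assert (E : plus ((c - 0) * 1) ((1 - c) * 0) = c) by (cbn; ring).
  rewrite <- E.
  apply (is_RInt_Chasles h 0 c 1); apply is_RInt_const'; auto; lra. Qed.

Lemma is_RInt_cst2 (h : R -> R) a b c v : a <= b -> v = (b - a) * c ->
  (forall x, a < x < b -> h x = c) -> is_RInt h a b v.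
Proof. intros Hab -> H. now apply is_RInt_const'. Qed.

Lemma exp_le1 z : z <= 0 -> exp z <= 1.
Proof. intros H. destruct (Req_dec z 0) as [->|Hn]. rewrite exp_0; lra.
  left. rewrite <- exp_0. apply exp_increasing. lra. Qed.

Definition gfun (a l t u1 : R) : R :=
  if excluded_middle_informative (0 < u1 < 1) then exp (- (t / Kf a l u1)) else 0.

Lemma prob_inner a l t u1 : 0 <= t -> 0 <= u1 <= 1 ->
  RInt_is (fun u2 => ind2 (fun u1 u2 => tau a l u1 u2 > t) u1 u2) 0 1 (gfun a l t u1).
Proof. intros Ht Hu1. apply to_RInt_is. unfold gfun.
  destruct (excluded_middle_informative (0 < u1 < 1)) as [Hin|Hout].
  - pose proof (Kf_pos a l u1).
    assert (Hc : 0 < exp (- (t / Kf a l u1)) <= 1).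
    { split. apply exp_pos. apply exp_le1.
      assert (0 <= t / Kf a l u1) by (apply Rdiv_le_0_compat; lra). lra. }
    apply inner_int; auto.
    + intros x Hx. unfold ind2. destruct (excluded_middle_informative _) as [_|Hn]; auto.
      exfalso. apply Hn. split; auto. split; [lra|]. apply tau_gt; lra.
    + intros x Hx. unfold ind2. destruct (excluded_middle_informative _) as [Hy|_]; auto.
      exfalso. destruct Hy as [_ [_ Hy]]. apply tau_gt in Hy; lra.
  - apply is_RInt_cst2 with 0; [lra|ring|].
    intros x Hx. unfold ind2. destruct (excluded_middle_informative _) as [Hy|_]; auto.
    exfalso; apply Hout; tauto.
Qed.

Definition ustar (a : R) := (1 / (2 * a) - 1) / Cst a.

Lemma Th_ustar a : 0 < a < 1 -> Th a (ustar a) = PI / 2.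
Proof. intros Ha. pose proof (Cst_pos a Ha). unfold Th, ustar. field. lra. Qed.

Lemma cos_Th_nz a u : 0 < a < 1 -> 0 < u < 1 -> u <> ustar a -> cos (Th a u) <> 0.
Proof. intros Ha Hu Hne. pose proof (Th_range a u Ha Hu). pose proof PI_RGT_0.
  destruct (Rlt_or_le u (ustar a)) as [Hl|Hl].
  - apply Th_lt with (a := a) in Hl; auto. rewrite Th_ustar in Hl by auto.
    apply Rgt_not_eq. apply cos_gt_0; nra.
  - assert (Hl' : ustar a < u) by lra.
    apply Th_lt with (a := a) in Hl'; auto. rewrite Th_ustar in Hl' by auto.
    apply Rlt_not_eq. apply cos_lt_0; nra.
Qed.

Lemma g_eq_f a l t u : 0 < a < 1 -> 0 < l -> 0 < u < 1 -> u <> ustar a ->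
  gfun a l t u = ff a l t u.
Proof. intros Ha Hl Hu Hne. unfold gfun, ff.
  destruct (excluded_middle_informative _) as [_|Hn]; [|tauto].
  rewrite <- (Kf_inv a l u) by (auto; apply cos_Th_nz; auto).
  f_equal. pose proof (Kf_pos a l u). field. lra. Qed.

Lemma is_RInt_pt_ext (f g : R -> R) a b c v : a < b ->
  (forall x, a < x < b -> x <> c -> f x = g x) -> is_RInt f a b v -> is_RInt g a b v.
Proof. intros Hab H Hf.
  destruct (Rlt_or_le a c) as [H1|H1]; [destruct (Rlt_or_le c b) as [H2|H2]|].
  - assert (Ex : ex_RInt f a b) by (exists v; auto).
    assert (E1 : ex_RInt f a c) by (apply (ex_RInt_Chasles_1 (V := R_CompleteNormedModule) f a c b); auto; lra).
    assert (E2 : ex_RInt f c b) by (apply (ex_RInt_Chasles_2 (V := R_CompleteNormedModule) f a c b); auto; lra).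
    assert (Hv : v = plus (RInt f a c) (RInt f c b)).
    { rewrite RInt_Chasles; auto. symmetry; now apply is_RInt_unique. }
    rewrite Hv. apply (is_RInt_Chasles g a c b).
    + apply is_RInt_ext with f. intros x Hx. rewrite Rmin_left in Hx by lra.
      rewrite Rmax_right in Hx by lra. apply H; lra. exact (RInt_correct (V := R_CompleteNormedModule) f a c E1).
    + apply is_RInt_ext with f. intros x Hx. rewrite Rmin_left in Hx by lra.
      rewrite Rmax_right in Hx by lra. apply H; lra. exact (RInt_correct (V := R_CompleteNormedModule) f c b E2).
  - apply is_RInt_ext with f; auto. intros x Hx. rewrite Rmin_left in Hx by lra.
      rewrite Rmax_right in Hx by lra. apply H; lra.
  - apply is_RInt_ext with f; auto. intros x Hx. rewrite Rmin_left in Hx by lra.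
      rewrite Rmax_right in Hx by lra. apply H; lra.
Qed.

Lemma Th_lin a u : 0 < a < 1 -> Th a u = a * PI + (PI - a * PI) * u.
Proof. intros Ha. unfold Th, Cst. field. lra. Qed.

Lemma exp_le x y : x <= y -> exp x <= exp y.
Proof. intros H. destruct (Req_dec x y) as [->|Hn]; [lra|]. left; apply exp_increasing; lra. Qed.

Lemma Rpower_le_self p e : 0 < p <= 1 -> 1 <= e -> Rpower p e <= p.
Proof. intros Hp He. unfold Rpower. rewrite <- (exp_ln p) at 2 by lra. apply exp_le.
  assert (ln p <= 0). { rewrite <- ln_1. destruct (Req_dec p 1) as [->|]; [lra|].
    left; apply ln_increasing; lra. } nra. Qed.

Lemma Rpower_pos x p : 0 < Rpower x p.
Proof. unfold Rpower. apply exp_pos. Qed.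

Lemma cont_Rpower p x : 0 < x -> continuous (fun s => Rpower s p) x.
Proof. intros Hx. apply (@ex_derive_continuous R_AbsRing R_NormedModule). exists (p * Rpower x (p - 1)).
  apply is_derive_Reals. now apply derivable_pt_lim_power. Qed.

Lemma cont_der (f : R -> R) x : ex_derive f x -> continuous f x.
Proof. apply (@ex_derive_continuous R_AbsRing R_NormedModule). Qed.

Lemma cont_eps (f : R -> R) x :
  (forall eps, 0 < eps -> exists d, 0 < d /\ forall y, Rabs (y - x) < d -> Rabs (f y - f x) < eps) ->
  continuous f x.
Proof. intros H. apply continuity_pt_filterlim. intros eps Heps.
  destruct (H eps Heps) as [d [Hd Hy]]. exists d. split; auto.
  intros y [_ Hy2]. apply Hy. exact Hy2. Qed.

Definition Ef (a t p : R) := if Rle_dec p 0 then 0 else exp (- (t / Rpower p (1 / a))).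
Definition Hf (a t q : R) := if Rle_dec q 0 then 1 else exp (- (Rpower q (1 / a) * t)).

Lemma Ef_cont a t p : 0 < a < 1 -> 0 < t -> 0 <= p -> continuous (Ef a t) p.
Proof. intros Ha Ht Hp. destruct Hp as [Hp|Hp].
  - apply continuous_ext_loc with (fun p => exp (- (t / Rpower p (1 / a)))).
    + assert (Hl : locally p (fun y => 0 < y)).
      { exists (mkposreal p Hp). intros y Hy. cbn in Hy. unfold ball in Hy; cbn in Hy.
        unfold AbsRing_ball, abs, minus, plus, opp in Hy; cbn in Hy. apply Rabs_def2 in Hy. lra. }
      revert Hl. apply filter_imp. intros y Hy. unfold Ef. destruct (Rle_dec y 0); [lra|auto].
    + apply (continuous_comp (fun p => Rpower p (1/a)) (fun r => exp (- (t / r)))).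
      now apply cont_Rpower. apply cont_der. auto_derive. apply Rgt_not_eq, Rpower_pos.
  - subst p. apply cont_eps. intros eps Heps.
    exists (Rmin 1 (eps * t)). split. apply Rmin_pos; nra.
    intros y Hy. unfold Ef at 2. destruct (Rle_dec 0 0) as [_|]; [|lra].
    unfold Ef. destruct (Rle_dec y 0). rewrite Rminus_0_r, Rabs_R0. lra.
    rewrite Rminus_0_r in *. rewrite Rabs_right in Hy by lra.
    assert (Hy1 : y < 1) by (apply Rlt_le_trans with (1 := Hy); apply Rmin_l).
    assert (Hy2 : y < eps * t) by (apply Rlt_le_trans with (1 := Hy); apply Rmin_r).
    set (r := Rpower y (1 / a)).
    assert (Hr : r <= y). { apply Rpower_le_self. lra. apply (Rmult_le_reg_r a); try lra.
      field_simplify; lra. }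
    assert (Hr0 : 0 < r) by apply Rpower_pos.
    rewrite Rabs_right by (left; apply exp_pos).
    rewrite exp_Ropp. assert (Hz : 1 + t / r < exp (t / r)).
    { apply exp_ineq1. apply Rgt_not_eq. apply Rdiv_lt_0_compat; lra. }
    assert (0 < t / r) by (apply Rdiv_lt_0_compat; lra).
    apply Rlt_trans with (/ (t / r)).
    + apply Rinv_lt_contravar; [apply Rmult_lt_0_compat; [lra|apply exp_pos]|lra].
    + replace (/ (t / r)) with (r / t) by (field; lra).
      apply (Rmult_lt_reg_r t); auto. field_simplify; lra.
Qed.

Lemma Hf_cont a t q : 0 < a < 1 -> 0 <= t -> 0 <= q -> continuous (Hf a t) q.
Proof. intros Ha Ht Hq. destruct Hq as [Hq|Hq].
  - apply continuous_ext_loc with (fun q => exp (- (Rpower q (1 / a) * t))).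
    + assert (Hl : locally q (fun y => 0 < y)).
      { exists (mkposreal q Hq). intros y Hy. cbn in Hy. unfold ball in Hy; cbn in Hy.
        unfold AbsRing_ball, abs, minus, plus, opp in Hy; cbn in Hy. apply Rabs_def2 in Hy. lra. }
      revert Hl. apply filter_imp. intros y Hy. unfold Hf. destruct (Rle_dec y 0); [lra|auto].
    + apply (continuous_comp (fun p => Rpower p (1/a)) (fun r => exp (- (r * t)))).
      now apply cont_Rpower. apply cont_der. auto_derive. auto.
  - subst q. apply cont_eps. intros eps Heps.
    exists (Rmin 1 (eps / (t + 1))). split. apply Rmin_pos. lra. apply Rdiv_lt_0_compat; lra.
    intros y Hy. unfold Hf at 2. destruct (Rle_dec 0 0) as [_|]; [|lra].
    unfold Hf. destruct (Rle_dec y 0). rewrite Rminus_eq_0, Rabs_R0. lra.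
    rewrite Rminus_0_r in *. rewrite Rabs_right in Hy by lra.
    assert (Hy1 : y < 1) by (apply Rlt_le_trans with (1 := Hy); apply Rmin_l).
    assert (Hy2 : y < eps / (t + 1)) by (apply Rlt_le_trans with (1 := Hy); apply Rmin_r).
    set (r := Rpower y (1 / a)).
    assert (Hr : r <= y). { apply Rpower_le_self. lra. apply (Rmult_le_reg_r a); try lra.
      field_simplify; lra. }
    assert (Hr0 : 0 < r) by apply Rpower_pos.
    pose proof (exp_ineq1_le (- (r * t))).
    assert (exp (- (r * t)) <= 1) by (apply exp_le1; nra).
    rewrite Rabs_left1 by lra.
    assert (y * (t + 1) < eps).
    { apply (Rmult_lt_compat_r (t + 1)) in Hy2; [|lra]. field_simplify in Hy2; lra. }
    nra.
Qed.

Definition Pf (a l u : R) := sin (Th a u - a * PI) / (l * sin (Th a u)).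

Lemma A_bounds a : 0 < a < 1 -> 0 < a * PI < PI.
Proof. intros Ha. pose proof PI_RGT_0. split; nra. Qed.

Lemma ex_RInt_cont (f : R -> R) a b : a <= b -> (forall z, a <= z <= b -> continuous f z) ->
  ex_RInt f a b.
Proof. intros Hab H. apply (ex_RInt_continuous (V := R_CompleteNormedModule)).
  intros z Hz. rewrite Rmin_left in Hz by lra. rewrite Rmax_right in Hz by lra. auto. Qed.

Lemma ff_int a l t : 0 < a < 1 -> 0 < l -> 0 <= t -> exists I, is_RInt (ff a l t) 0 1 I.
Proof. intros Ha Hl Ht. pose proof (A_bounds a Ha) as HA. pose proof PI_RGT_0.
  destruct Ht as [Ht|Ht].
  2:{ subst t. exists 1. apply is_RInt_cst2 with 1; [lra|ring|].
      intros x _. unfold ff. rewrite Rmult_0_r, Ropp_0. apply exp_0. }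
  assert (E1 : ex_RInt (fun u => Ef a t (Pf a l u)) 0 (1/2)).
  { apply ex_RInt_cont; [lra|]. intros z Hz.
    assert (Hs : 0 < sin (a * PI + (PI - a * PI) * z)) by (apply sin_gt_0; nra).
    apply (continuous_comp (Pf a l) (Ef a t)).
    - apply cont_der. unfold Pf, Th. auto_derive. fold (Th a z). rewrite Th_lin by auto.
      apply Rgt_not_eq. apply Rmult_lt_0_compat; auto.
    - apply Ef_cont; auto. unfold Pf. rewrite Th_lin by auto.
      apply Rdiv_le_0_compat; [|apply Rmult_lt_0_compat; auto].
      apply sin_ge_0; nra. }
  assert (E2 : ex_RInt (fun u => Hf a t (Qf a l u)) (1/2) 1).
  { apply ex_RInt_cont; [lra|]. intros z Hz.
    assert (Hs : 0 < sin (a * PI + (PI - a * PI) * z - a * PI)) by (apply sin_gt_0; nra).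
    apply (continuous_comp (Qf a l) (Hf a t)).
    - apply cont_der. unfold Qf, Th. auto_derive. fold (Th a z). rewrite Th_lin by auto.
      apply Rgt_not_eq. auto.
    - apply Hf_cont; try lra. unfold Qf. rewrite Th_lin by auto.
      apply Rdiv_le_0_compat; auto. apply Rmult_le_pos; [lra|]. apply sin_ge_0; nra. }
  destruct E1 as [I1 H1]. destruct E2 as [I2 H2]. exists (plus I1 I2).
  apply (is_RInt_Chasles (ff a l t) 0 (1/2) 1).
  - apply is_RInt_ext with (2 := H1). intros x Hx.
    rewrite Rmin_left in Hx by lra. rewrite Rmax_right in Hx by lra.
    assert (Hx' : 0 < x < 1) by lra.
    pose proof (sinT_pos a x Ha Hx'). pose proof (sinTa_pos a x Ha Hx').
    unfold Ef, ff. destruct (Rle_dec (Pf a l x) 0) as [Hn|_].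
    { exfalso. unfold Pf in Hn. assert (0 < sin (Th a x - a * PI) / (l * sin (Th a x))).
      apply Rdiv_lt_0_compat; auto. apply Rmult_lt_0_compat; auto. lra. }
    f_equal. unfold Sfun. replace (Qf a l x) with (/ Pf a l x).
    rewrite Rpower_inv. field. apply Rgt_not_eq, Rpower_pos.
    unfold Pf. apply Rdiv_lt_0_compat; auto. apply Rmult_lt_0_compat; auto.
    unfold Pf, Qf. field. split; lra.
  - apply is_RInt_ext with (2 := H2). intros x Hx.
    rewrite Rmin_left in Hx by lra. rewrite Rmax_right in Hx by lra.
    assert (Hx' : 0 < x < 1) by lra.
    pose proof (sinT_pos a x Ha Hx'). pose proof (sinTa_pos a x Ha Hx').
    unfold Hf, ff. destruct (Rle_dec (Qf a l x) 0) as [Hn|_].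
    { exfalso. unfold Qf in Hn. assert (0 < l * sin (Th a x) / sin (Th a x - a * PI)).
      apply Rdiv_lt_0_compat; auto. apply Rmult_lt_0_compat; auto. lra. }
    reflexivity.
Qed.

Definition yv (a l s : R) := cos (a * PI) / sin (a * PI) - l / (sin (a * PI) * Rpower s a).

Lemma Th_phi a l s : 0 < a < 1 -> Th a (phi a l s) = PI / 2 - atan (yv a l s).
Proof. intros Ha. pose proof (Cst_pos a Ha). pose proof (A_bounds a Ha).
  unfold Th, phi, yv. field. split; lra. Qed.

Lemma cos_atan_pos y : 0 < cos (atan y).
Proof. pose proof (atan_bound y). apply cos_gt_0; lra. Qed.

Lemma sin_atan y : sin (atan y) = y * cos (atan y).
Proof. pose proof (cos_atan_pos y). rewrite <- (tan_atan y) at 2. unfold tan. field. lra. Qed.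

Lemma Sfun_phi a l s : 0 < a < 1 -> 0 < l -> 0 < s -> Sfun a l (phi a l s) = s.
Proof. intros Ha Hl Hs. pose proof (sa_pos a Ha). unfold Sfun, Qf. rewrite Th_phi by auto.
  rewrite (sin_minus (PI / 2 - atan (yv a l s)) (a * PI)), sin_shift, cos_shift, sin_atan.
  pose proof (cos_atan_pos (yv a l s)). set (c := cos (atan (yv a l s))) in *.
  assert (Hx : 0 < Rpower s a) by apply Rpower_pos.
  replace (c * cos (a * PI) - yv a l s * c * sin (a * PI)) with (c * (l / Rpower s a)).
  2:{ unfold yv. field. split; lra. }
  replace (l * c / (c * (l / Rpower s a))) with (Rpower s a) by (field; repeat split; lra).
  rewrite Rpower_mult. replace (a * (1 / a)) with 1 by (field; lra). apply Rpower_1; auto.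
Qed.

Lemma phi_Sfun a l u : 0 < a < 1 -> 0 < l -> 0 < u < 1 -> phi a l (Sfun a l u) = u.
Proof. intros Ha Hl Hu. pose proof (sa_pos a Ha). pose proof (Cst_pos a Ha). pose proof (A_bounds a Ha).
  pose proof (sinT_pos a u Ha Hu). pose proof (sinTa_pos a u Ha Hu). pose proof (Th_range a u Ha Hu).
  assert (HQ : 0 < Qf a l u).
  { unfold Qf. apply Rdiv_lt_0_compat; auto. apply Rmult_lt_0_compat; auto. }
  assert (Hy : yv a l (Sfun a l u) = tan (PI / 2 - Th a u)).
  { unfold yv, Sfun. rewrite Rpower_mult. replace (1 / a * a) with 1 by (field; lra).
    rewrite Rpower_1 by auto. unfold tan. rewrite sin_shift, cos_shift. unfold Qf.
    rewrite sin_minus. pose proof H3 as H3'. rewrite sin_minus in H3'. field. repeat split; lra. }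
  unfold phi. fold (yv a l (Sfun a l u)). rewrite Hy. rewrite atan_tan by lra.
  unfold Th. field. split; lra.
Qed.

Lemma phi_range a l s : 0 < a < 1 -> 0 < l -> 0 < s -> 0 < phi a l s < 1.
Proof. intros Ha Hl Hs. pose proof (sa_pos a Ha). pose proof (Cst_pos a Ha). pose proof (A_bounds a Ha).
  assert (HT : Th a 0 < Th a (phi a l s) < Th a 1).
  { rewrite Th_phi, Th_0, Th_1 by auto. pose proof (atan_bound (yv a l s)).
    split; [|lra].
    assert (atan (yv a l s) < PI / 2 - a * PI); [|lra].
    replace (PI / 2 - a * PI) with (atan (tan (PI / 2 - a * PI))) by (apply atan_tan; lra).
    apply atan_increasing. unfold tan. rewrite sin_shift, cos_shift. unfold yv.
    assert (0 < l / (sin (a * PI) * Rpower s a)).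
    { apply Rdiv_lt_0_compat; auto. apply Rmult_lt_0_compat; auto. apply Rpower_pos. }
    lra. }
  rewrite !Th_lin in HT by auto. split; nra.
Qed.

Lemma phi_decr a l s1 s2 : 0 < a < 1 -> 0 < l -> 0 < s1 -> s1 < s2 -> phi a l s2 < phi a l s1.
Proof. intros Ha Hl Hs1 H12. pose proof (sa_pos a Ha). pose proof (Cst_pos a Ha). pose proof (A_bounds a Ha).
  assert (Hx : Rpower s1 a < Rpower s2 a) by (apply Rlt_Rpower_l; lra).
  pose proof (Rpower_pos s1 a).
  assert (Hy : yv a l s1 < yv a l s2).
  { unfold yv. unfold Rminus. apply Rplus_lt_compat_l. apply Ropp_lt_contravar.
    unfold Rdiv. apply Rmult_lt_compat_l; auto. apply Rinv_lt_contravar.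
    apply Rmult_lt_0_compat; apply Rmult_lt_0_compat; auto; lra.
    apply Rmult_lt_compat_l; auto. }
  apply atan_increasing in Hy. unfold phi. fold (yv a l s1). fold (yv a l s2).
  unfold Rdiv. apply Rmult_lt_compat_r. apply Rinv_0_lt_compat; auto.
  apply Rplus_lt_compat_r. apply Rmult_lt_compat_r. apply Rinv_0_lt_compat; lra. lra.
Qed.

Lemma cmul (f g : R -> R) x : continuous f x -> continuous g x -> continuous (fun y => f y * g y) x.
Proof. intros Hf Hg. apply continuity_pt_filterlim. apply continuity_pt_filterlim in Hf.
  apply continuity_pt_filterlim in Hg. exact (continuity_pt_mult f g x Hf Hg). Qed.
Lemma cplus (f g : R -> R) x : continuous f x -> continuous g x -> continuous (fun y => f y + g y) x.
Proof. intros Hf Hg. apply continuity_pt_filterlim. apply continuity_pt_filterlim in Hf.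
  apply continuity_pt_filterlim in Hg. exact (continuity_pt_plus f g x Hf Hg). Qed.
Lemma cminus (f g : R -> R) x : continuous f x -> continuous g x -> continuous (fun y => f y - g y) x.
Proof. intros Hf Hg. apply continuity_pt_filterlim. apply continuity_pt_filterlim in Hf.
  apply continuity_pt_filterlim in Hg. exact (continuity_pt_minus f g x Hf Hg). Qed.
Lemma cdiv (f g : R -> R) x : continuous f x -> continuous g x -> g x <> 0 -> continuous (fun y => f y / g y) x.
Proof. intros Hf Hg Hn. apply continuity_pt_filterlim. apply continuity_pt_filterlim in Hf.
  apply continuity_pt_filterlim in Hg. exact (continuity_pt_div f g x Hf Hg Hn). Qed.
Lemma ccst (c x : R) : continuous (fun _ => c) x.
Proof. apply continuity_pt_filterlim. apply continuity_pt_const. intros u v; auto. Qed.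
Lemma copp (f : R -> R) x : continuous f x -> continuous (fun y => - f y) x.
Proof. intros Hf. apply continuity_pt_filterlim. apply continuity_pt_filterlim in Hf.
  exact (continuity_pt_opp f x Hf). Qed.

Lemma Rpower_2a s a : Rpower s (2 * a) = Rpower s a * Rpower s a.
Proof. replace (2 * a) with (a + a) by ring. apply Rpower_plus. Qed.

Lemma D_pos a l s : 0 < a < 1 -> 0 < l ->
  0 < Rpower s (2 * a) - 2 * l * Rpower s a * cos (a * PI) + l ^ 2.
Proof. intros Ha Hl. rewrite Rpower_2a. pose proof (sa_pos a Ha). pose proof (Rpower_pos s a).
  pose proof (sin2_cos2 (a * PI)). unfold Rsqr in H1.
  set (x := Rpower s a) in *. set (c := cos (a * PI)) in *. set (sn := sin (a * PI)) in *.
  replace (x * x - 2 * l * x * c + l ^ 2) with ((x * c - l) ^ 2 + (x * sn) ^ 2).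
  2:{ replace (x * x) with (x * x * (sn * sn + c * c)) by (rewrite H1; ring). ring. }
  assert (0 < (x * sn) ^ 2) by (apply pow_lt, Rmult_lt_0_compat; auto). pose proof (pow2_ge_0 (x * c - l)). lra. Qed.

Lemma W_cont a l s : 0 < a < 1 -> 0 < l -> 0 < s -> continuous (fun s => - W_plus a l s) s.
Proof. intros Ha Hl Hs. apply copp. unfold W_plus.
  apply cmul. apply ccst. apply cdiv. now apply cont_Rpower.
  apply cplus. apply cminus. now apply cont_Rpower. apply cmul. apply cmul. apply ccst.
  now apply cont_Rpower. apply ccst. apply ccst. apply Rgt_not_eq. now apply D_pos. Qed.

Lemma phi_der a l s : 0 < a < 1 -> 0 < l -> 0 < s -> is_derive (phi a l) s (- W_plus a l s).
Proof. intros Ha Hl Hs. pose proof (sa_pos a Ha). pose proof (Cst_pos a Ha). pose proof (A_bounds a Ha).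
  set (h := fun x => ((PI / 2 - atan (cos (a * PI) / sin (a * PI) - l / (sin (a * PI) * x))) / (a * PI) - 1) / Cst a).
  set (x := Rpower s a).
  assert (Hx : 0 < x) by apply Rpower_pos.
  set (y := cos (a * PI) / sin (a * PI) - l / (sin (a * PI) * x)).
  assert (Hp : is_derive (fun s => Rpower s a) s (a * Rpower s (a - 1))).
  { apply is_derive_Reals. now apply derivable_pt_lim_power. }
  assert (Hh : is_derive h x (- (l / (sin (a * PI) * x ^ 2)) / ((1 + y ^ 2) * (a * PI) * Cst a))).
  { unfold h. auto_derive. apply Rgt_not_eq, Rmult_lt_0_compat; auto.
    unfold y. field. repeat split; try lra.
    assert (0 < (x * sin (a * PI)) ^ 2) by (apply pow_lt, Rmult_lt_0_compat; auto).
    pose proof (pow2_ge_0 (cos (a * PI) * x - l)). lra. }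
  assert (Hc := is_derive_comp h (fun s => Rpower s a) s _ _ Hh Hp).
  replace (- W_plus a l s) with (scal (a * Rpower s (a - 1)) (- (l / (sin (a * PI) * x ^ 2)) / ((1 + y ^ 2) * (a * PI) * Cst a))).
  exact Hc.
  unfold scal; simpl; unfold mult; simpl. unfold W_plus. rewrite Rpower_2a. fold x.
  assert (E : x * x - 2 * l * x * cos (a * PI) + l ^ 2 = (sin (a * PI)) ^ 2 * x ^ 2 * (1 + y * (y * 1))).
  { pose proof (sin2_cos2 (a * PI)) as Hsc. unfold Rsqr in Hsc.
    transitivity (x * x * (sin (a * PI) * sin (a * PI) + cos (a * PI) * cos (a * PI)) - 2 * l * x * cos (a * PI) + l ^ 2).
    rewrite Hsc; ring. unfold y. field. split; lra. }
  rewrite E. assert (0 < 1 + y * (y * 1)) by nra.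
  field. repeat split; lra.
Qed.

Lemma ff_cont a l t u : 0 < a < 1 -> 0 < l -> 0 < u < 1 -> continuous (ff a l t) u.
Proof. intros Ha Hl Hu. pose proof (sinT_pos a u Ha Hu). pose proof (sinTa_pos a u Ha Hu).
  assert (HQ : 0 < Qf a l u).
  { unfold Qf. apply Rdiv_lt_0_compat; auto. apply Rmult_lt_0_compat; auto. }
  unfold ff, Sfun.
  apply (continuous_comp (fun u => Rpower (Qf a l u) (1 / a)) (fun q => exp (- (q * t)))).
  - apply (continuous_comp (Qf a l) (fun q => Rpower q (1 / a))).
    + apply cont_der. unfold Qf, Th. auto_derive. fold (Th a u). apply Rgt_not_eq. exact H0.
    + now apply cont_Rpower.
  - apply cont_der. auto_derive. auto.
Qed.

Lemma ff_bound a l t u : 0 <= t -> 0 < ff a l t u <= 1.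
Proof. intros Ht. unfold ff. split. apply exp_pos. apply exp_le1.
  pose proof (Rpower_pos (Qf a l u) (1 / a)). unfold Sfun. nra. Qed.

Lemma ff_ex a l t p q : 0 < a < 1 -> 0 < l -> 0 < p < 1 -> 0 < q < 1 -> ex_RInt (ff a l t) p q.
Proof. intros Ha Hl Hp Hq. apply (ex_RInt_continuous (V := R_CompleteNormedModule)).
  intros z Hz. apply ff_cont; auto.
  split. apply Rlt_le_trans with (Rmin p q). apply Rmin_glb_lt; lra. lra.
  apply Rle_lt_trans with (Rmax p q). lra. apply Rmax_lub_lt; lra. Qed.

Lemma subst a l t a' b' : 0 < a < 1 -> 0 < l -> 0 < a' < b' ->
  is_RInt (fun s => W_plus a l s * exp (- (s * t))) a' b'
    (RInt (ff a l t) (phi a l b') (phi a l a')).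
Proof. intros Ha Hl Hab.
  assert (Hc := is_RInt_comp (V := R_CompleteNormedModule) (ff a l t) (phi a l) (fun s => - W_plus a l s) a' b').
  rewrite Rmin_left, Rmax_right in Hc by lra.
  assert (H1 : forall x, a' <= x <= b' -> continuous (ff a l t) (phi a l x)).
  { intros x Hx. apply ff_cont; auto. apply phi_range; auto; lra. }
  assert (H2 : forall x, a' <= x <= b' -> is_derive (phi a l) x (- W_plus a l x) /\ continuous (fun s => - W_plus a l s) x).
  { intros x Hx. split. apply phi_der; auto; lra. apply W_cont; auto; lra. }
  specialize (Hc H1 H2).
  apply (is_RInt_opp (V := R_NormedModule)) in Hc.
  rewrite (opp_RInt_swap (V := R_CompleteNormedModule)) in Hc.
  2:{ apply ff_ex; auto; apply phi_range; auto; lra. }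
  apply (is_RInt_ext (V := R_NormedModule)) with (2 := Hc).
  intros x Hx. rewrite Rmin_left, Rmax_right in Hx by lra.
  unfold ff. rewrite Sfun_phi by (auto; lra).
  unfold opp, scal; simpl; unfold mult; simpl. ring.
Qed.

Lemma improper a l t I : 0 < a < 1 -> 0 < l -> 0 <= t -> is_RInt (ff a l t) 0 1 I ->
  improper_int_0_inf (fun s => W_plus a l s * exp (- (s * t))) I.
Proof. intros Ha Hl Ht HI eps Heps.
  set (e := Rmin (eps / 3) (1 / 4)).
  assert (He0 : 0 < e) by (apply Rmin_pos; lra).
  assert (He1 : e <= eps / 3) by apply Rmin_l.
  assert (He2 : e <= 1 / 4) by apply Rmin_r.
  exists (Sfun a l (1 - e)), (Sfun a l e). split. apply Rpower_pos.
  intros a' b' Ha' Hb'.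
  pose proof (Rpower_pos (Qf a l e) (1 / a)) as HM. fold (Sfun a l e) in HM.
  assert (Hpa : 1 - e < phi a l a').
  { rewrite <- (phi_Sfun a l (1 - e)) at 1 by (auto; lra). apply phi_decr; auto; lra. }
  assert (Hpb : phi a l b' < e).
  { rewrite <- (phi_Sfun a l e) by (auto; lra). apply phi_decr; auto; lra. }
  assert (Hab : a' < b').
  { destruct (Rlt_or_le a' b') as [|Hle]; auto. exfalso. destruct Hle as [Hlt|Heq].
    - pose proof (phi_decr a l b' a' Ha Hl ltac:(lra) Hlt). lra.
    - subst b'. lra. }
  pose proof (phi_range a l a' Ha Hl ltac:(lra)) as Ra.
  pose proof (phi_range a l b' Ha Hl ltac:(lra)) as Rb.
  assert (Hs := subst a l t a' b' Ha Hl ltac:(lra)).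
  assert (Ex : ex_RInt (fun s => W_plus a l s * exp (- (s * t))) a' b') by (eexists; exact Hs).
  exists (ex_RInt_Reals_0 _ _ _ Ex). rewrite <- RInt_Reals.
  rewrite (is_RInt_unique _ _ _ _ Hs).
  set (pa := phi a l a') in *. set (pb := phi a l b') in *.
  assert (E01 : ex_RInt (ff a l t) 0 1) by (eexists; exact HI).
  assert (E0b : ex_RInt (ff a l t) 0 pb) by (apply (ex_RInt_Chasles_1 (V := R_CompleteNormedModule) _ 0 pb 1); auto; lra).
  assert (Eb1 : ex_RInt (ff a l t) pb 1) by (apply (ex_RInt_Chasles_2 (V := R_CompleteNormedModule) _ 0 pb 1); auto; lra).
  assert (Eba : ex_RInt (ff a l t) pb pa) by (apply (ex_RInt_Chasles_1 (V := R_CompleteNormedModule) _ pb pa 1); auto; lra).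
  assert (Ea1 : ex_RInt (ff a l t) pa 1) by (apply (ex_RInt_Chasles_2 (V := R_CompleteNormedModule) _ pb pa 1); auto; lra).
  assert (HIe : I = RInt (ff a l t) 0 pb + RInt (ff a l t) pb pa + RInt (ff a l t) pa 1).
  { rewrite <- (is_RInt_unique _ _ _ _ HI).
    rewrite <- (RInt_Chasles (V := R_CompleteNormedModule) _ 0 pb 1) by auto.
    rewrite <- (RInt_Chasles (V := R_CompleteNormedModule) _ pb pa 1) by auto.
    unfold plus; simpl. ring. }
  assert (B1 : Rabs (RInt (ff a l t) 0 pb) <= (pb - 0) * 1).
  { apply abs_RInt_le_const; auto; try lra. intros x _. pose proof (ff_bound a l t x Ht).
    rewrite Rabs_right; lra. }
  assert (B2 : Rabs (RInt (ff a l t) pa 1) <= (1 - pa) * 1).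
  { apply abs_RInt_le_const; auto; try lra. intros x _. pose proof (ff_bound a l t x Ht).
    rewrite Rabs_right; lra. }
  rewrite HIe.
  replace (RInt (ff a l t) pb pa - (RInt (ff a l t) 0 pb + RInt (ff a l t) pb pa + RInt (ff a l t) pa 1))
    with (- (RInt (ff a l t) 0 pb + RInt (ff a l t) pa 1)) by ring.
  rewrite Rabs_Ropp. eapply Rle_lt_trans. apply Rabs_triang. lra.
Qed.

Theorem mainTheorem4 (alpha lambda : R) (Ha : 0 < alpha < 1) (Hl : 0 < lambda) :
  prob_unif2 (fun u1 u2 => tau alpha lambda u1 u2 > 0) 1 /\
  (forall t, 0 <= t ->
     exists L,
       improper_int_0_inf (fun s => W_plus alpha lambda s * exp (- (s * t))) L /\
       prob_unif2 (fun u1 u2 => tau alpha lambda u1 u2 > t) L).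
Proof. split.
  - exists (gfun alpha lambda 0). split.
    + intros u1 Hu1. apply prob_inner; auto; lra.
    + apply to_RInt_is. apply is_RInt_cst2 with 1; [lra|ring|].
      intros x Hx. unfold gfun. destruct (excluded_middle_informative _) as [_|Hn]; [|lra].
      unfold Rdiv. rewrite Rmult_0_l, Ropp_0. apply exp_0.
  - intros t Ht. destruct (ff_int alpha lambda t Ha Hl Ht) as [I HI]. exists I. split.
    + apply improper; auto.
    + exists (gfun alpha lambda t). split.
      * intros u1 Hu1. apply prob_inner; auto.
      * apply to_RInt_is. apply (is_RInt_pt_ext (ff alpha lambda t) _ 0 1 (ustar alpha)); [lra| |exact HI].
        intros x Hx Hne. symmetry. apply g_eq_f; auto.
Qed.
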